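(* Let $K\ge2$, $s\in(0,1)$, $q_1\ge\cdots\ge q_K>0$ with $\sum_{i=1}^Kq_i+s=1$. Let $\alpha_i=\log_{q_1}q_i$, let $R_0>1$ be the unique positive root of $\sum_{i=1}^KX^{-\alpha_i}=1$, let $-\beta=\log q_1/\log R_0$, and let $\overline{\mu}_K=\frac1K\sum_{i=1}^K\log_Kq_i$. Then $\overline{\mu}_K\le-\beta$, with equality when $q_1=\cdots=q_K$.
   Context: $-\beta$ is the exponent of the power law $B_r\approx r^{-\beta}$ for ranked word base values in the monkey-at-the-typewriter model with letter probabilities $q_i$ and space probability $s$. $\log_K$ denotes logarithm to base $K$. *)

(* Defs.v *)
From Stdlib Require Import Reals Lra Lia.
Open Scope R_scope.

Definition logb (b x : R) : R := ln x / ln b.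

(* finite sum over indices i = 0, ..., K-1 (the paper's indices 1..K, shifted) *)
Definition sumK (K : nat) (f : nat -> R) : R := sum_f_R0 f (K - 1).

(* Main.v *)
Require Import Defs.
From Stdlib Require Import Reals Lra Lia.
Open Scope R_scope.

Lemma ln_le' x y : 0 < x -> x <= y -> ln x <= ln y.
Proof. intros Hx [H|H]. left; apply ln_increasing; auto. subst; lra. Qed.

Lemma sum_ge_first (f : nat -> R) (N : nat) :
  (forall i, (i <= N)%nat -> 0 <= f i) -> f 0%nat <= sum_f_R0 f N.
Proof.
  induction N; intros H; simpl. lra.
  assert (0 <= f (S N)) by (apply H; lia).
  assert (f 0%nat <= sum_f_R0 f N) by (apply IHN; intros; apply H; lia). lra.
Qed.

Theorem proposition1 (K : nat) (s : R) (q : nat -> R) (R0 : R)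
  (HK : (2 <= K)%nat)
  (Hs : 0 < s < 1)
  (Hdec : forall i j : nat, (i <= j)%nat -> (j < K)%nat -> q j <= q i)
  (Hpos : forall i : nat, (i < K)%nat -> 0 < q i)
  (Hsum : sumK K q + s = 1)
  (HR0pos : 0 < R0)
  (HR0root : sumK K (fun i => Rpower R0 (- logb (q 0%nat) (q i))) = 1) :
  let minus_beta := ln (q 0%nat) / ln R0 in
  let mu := / INR K * sumK K (fun i => logb (INR K) (q i)) in
  mu <= minus_beta /\
  ((forall i : nat, (i < K)%nat -> q i = q 0%nat) -> mu = minus_beta).
Proof.
  intros mb mu. unfold mb, mu, sumK, logb in *; clear mb mu.
  assert (HKr : INR (S (K - 1)) = INR K) by (f_equal; lia).
  assert (HK2 : 2 <= INR K) by (change 2 with (INR 2); apply le_INR; lia).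
  assert (Hq0 : 0 < q 0%nat) by (apply Hpos; lia).
  assert (Hq01 : q 0%nat < 1).
  { assert (q 0%nat <= sum_f_R0 q (K - 1)).
    { apply sum_ge_first. intros; left; apply Hpos; lia. }
    lra. }
  assert (Hl0 : ln (q 0%nat) < 0) by (rewrite <- ln_1; apply ln_increasing; lra).
  assert (HlK : 0 < ln (INR K)) by (rewrite <- ln_1; apply ln_increasing; lra).
  set (a := ln (q 0%nat)) in *.
  assert (HR1 : 0 < ln R0).
  { destruct (Rlt_or_le 0 (ln R0)) as [h|h]; auto. exfalso.
    assert (sum_f_R0 (fun _ => 1) (K - 1) <=
            sum_f_R0 (fun i => Rpower R0 (- (ln (q i) / a))) (K - 1)).
    { apply sum_Rle. intros i Hi.
      assert (0 < q i) by (apply Hpos; lia).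
      assert (q i <= q 0%nat) by (apply Hdec; lia).
      assert (ln (q i) <= a) by (apply ln_le'; auto).
      assert (0 < ln (q i) / a).
      { unfold Rdiv. replace (ln (q i) * / a) with ((- ln (q i)) * / (- a)) by (field; lra).
        apply Rmult_lt_0_compat; [lra| apply Rinv_0_lt_compat; lra]. }
      unfold Rpower. rewrite <- exp_0.
      destruct (Req_dec (- (ln (q i) / a) * ln R0) 0) as [e|e].
      - rewrite e; lra.
      - left. apply exp_increasing. nra. }
    rewrite sum_cte, HKr in H. lra. }
  split.
  - set (t := - ln R0 / a).
    assert (Ht : 0 < t).
    { unfold t, Rdiv. replace (- ln R0 * / a) with (ln R0 * / (- a)) by (field; lra).
      apply Rmult_lt_0_compat; [lra| apply Rinv_0_lt_compat; lra]. }
    assert (Hkey : sum_f_R0 (fun i => 1 + (ln (INR K) + t * ln (q i))) (K - 1) <=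
                   sum_f_R0 (fun i => INR K * Rpower R0 (- (ln (q i) / a))) (K - 1)).
    { apply sum_Rle. intros i Hi.
      eapply Rle_trans. apply exp_ineq1_le.
      rewrite exp_plus, exp_ln by lra. unfold Rpower.
      right. f_equal. f_equal. unfold t. field. lra. }
    rewrite sum_plus, sum_cte, sum_plus, sum_cte, HKr in Hkey.
    assert (E1 : sum_f_R0 (fun l => t * ln (q l)) (K - 1) = t * sum_f_R0 (fun i => ln (q i)) (K - 1)).
    { rewrite scal_sum. apply sum_eq; intros; ring. }
    assert (E2 : sum_f_R0 (fun i => INR K * Rpower R0 (- (ln (q i) / a))) (K - 1) = INR K * 1).
    { rewrite <- HR0root, scal_sum. apply sum_eq; intros; ring. }
    rewrite E1, E2 in Hkey.
    assert (Hm : sum_f_R0 (fun i => ln (q i) / ln (INR K)) (K - 1)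
                 = / ln (INR K) * sum_f_R0 (fun i => ln (q i)) (K - 1)).
    { rewrite scal_sum. apply sum_eq. intros; unfold Rdiv; ring. }
    rewrite Hm.
    set (S := sum_f_R0 (fun i => ln (q i)) (K - 1)) in *.
    assert (HtS : t * S <= - (ln (INR K) * INR K)) by lra.
    unfold t in HtS.
    assert (HS : ln R0 * S <= INR K * ln (INR K) * a).
    { assert (E : ln R0 * S = (- ln R0 / a * S) * (- a)) by (field; lra).
      rewrite E. replace (INR K * ln (INR K) * a) with (- (ln (INR K) * INR K) * (- a)) by ring.
      apply Rmult_le_compat_r; lra. }
    assert (HK0 : 0 < INR K) by lra.
    apply (Rmult_le_reg_r (INR K * ln (INR K) * ln R0)).
    { repeat apply Rmult_lt_0_compat; auto. }
    replace (/ INR K * (/ ln (INR K) * S) * (INR K * ln (INR K) * ln R0)) with (ln R0 * S)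
      by (field; lra).
    replace (a / ln R0 * (INR K * ln (INR K) * ln R0)) with (INR K * ln (INR K) * a)
      by (field; lra). exact HS.
  - intros Heq.
    assert (HR : sum_f_R0 (fun i => Rpower R0 (- (ln (q i) / a))) (K - 1)
                 = sum_f_R0 (fun _ => / R0) (K - 1)).
    { apply sum_eq. intros i Hi. rewrite Heq by lia. fold a.
      unfold Rpower. replace (- (a / a) * ln R0) with (- ln R0) by (field; lra).
      rewrite exp_Ropp, exp_ln; auto. }
    rewrite HR, sum_cte, HKr in HR0root.
    assert (R0 = INR K).
    { apply (Rmult_eq_reg_l (/ R0)); [| apply Rinv_neq_0_compat; lra].
      rewrite Rinv_l by lra. lra. }
    assert (Hm : sum_f_R0 (fun i => ln (q i) / ln (INR K)) (K - 1)
                 = sum_f_R0 (fun _ => a / ln (INR K)) (K - 1)).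
    { apply sum_eq. intros i Hi. rewrite Heq by lia. reflexivity. }
    rewrite Hm, sum_cte, HKr. subst R0. field. lra.
Qed.
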